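(* Let $V$ be a $G$-representation. There exist $n_1\in\mathbb{N}_{>0}$ and a $G$-invariant tensor $\theta_0\in(V^* )^{\otimes n_1}$ such that for every $k\in\mathbb{N}$ there exists $M_1\in\mathbb{N}$ such that for all $m>M_1$ and all linear subspaces $W\subseteq V^{\otimes[m]}$ the following holds: if $\dim\theta(\sigma(W))\le k$ for all $\sigma\in S_m$ and all tensors $\theta\in(V^* )^{\otimes n_1}$ of the form $\theta=\theta_0\circ(\phi_0\otimes\cdots\otimes\phi_{n_1-1})$ with $(\phi_0,\ldots,\phi_{n_1-1})\in\mathrm{GL}_G(V)^{n_1}$, then $\dim W\le k$.
   Context: $G$ is a finite Abelian group and $K$ an infinite field over which every finite-dimensional $G$-representation is a direct sum of one-dimensional irreducibles; $V$ is finite-dimensional. $[m]=\{0,\ldots,m-1\}$. $\mathrm{GL}_G(V)$ is the group of invertible $G$-equivariant linear maps $V\to V$. $S_m$ acts on $V^{\otimes[m]}$ by permuting tensor factors. For $\theta\in(V^* )^{\otimes n_1}$, $\theta(\cdot)$ denotes the contraction $V^{\otimes[m]}\to V^{\otimes[m-n_1]}$ of the last $n_1$ factors: $v_0\otimes\cdots\otimes v_{m-1}\mapsto\theta(v_{m-n_1}\otimes\cdots\otimes v_{m-1})\,v_0\otimes\cdots\otimes v_{m-n_1-1}$. *)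

(* Defs.v *)
From HB Require Import structures.
From mathcomp Require Import all_boot all_order all_algebra all_fingroup all_solvable all_character.
Set Implicit Arguments.
Unset Strict Implicit.
Unset Printing Implicit Defensive.
Import GRing.Theory.
Local Open Scope ring_scope.

(* V = K^d (row vectors, MathComp's convention for representations).
   Tensors in V^{(x)[m]} and in (V^* )^{(x)m} are both represented by their
   coordinates w.r.t. the standard basis e_{i_0} (x) ... (x) e_{i_{m-1}}
   (resp. the dual basis), i.e. functions from multi-indices to K. *)
Section Tensors.
Variables (K : fieldType) (d : nat).

Definition idx (m : nat) := {ffun 'I_m -> 'I_d}.
Definition tensor (m : nat) := {ffun idx m -> K^o}.

(* S_m permutes tensor factors: sigma (v_0 (x)..(x) v_{m-1})
   = v_{sigma^-1 0} (x) .. (x) v_{sigma^-1 (m-1)}; in coordinates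
   (sigma t)(i) = t(i o sigma). *)
Definition perm_tensor m (s : 'S_m) (t : tensor m) : tensor m :=
  [ffun i : idx m => t [ffun k => i (s k)]].

Definition idx_cat p n (j : idx p) (l : idx n) : idx (p + n) :=
  [ffun k => match split k with inl a => j a | inr b => l b end].

Definition contract p n (theta : tensor n) (t : tensor (p + n)) : tensor p :=
  [ffun j : idx p => \sum_(l : idx n) theta l * t (idx_cat j l)].

(* theta o (phi_0 (x) .. (x) phi_{n-1}), where phi_k acts on row vectors
   by v |-> v *m phi_k, so phi_k e_b = sum_a phi_k b a e_a *)
Definition twist n (theta : tensor n) (phi : 'I_n -> 'M[K]_d) : tensor n :=
  [ffun l : idx n => \sum_(l' : idx n) theta l' * \prod_(k < n) phi k (l k) (l' k)].

Definition contract_image p n (theta : tensor n) (s : 'S_(p + n))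
  (W : {vspace tensor (p + n)}) : {vspace tensor p} :=
  (linfun (fun t => contract theta (perm_tensor s t)) @: W)%VS.

End Tensors.

Section Rep.
Variables (K : fieldType) (gT : finGroupType) (G : {group gT}) (d : nat).
Variable rho : mx_representation K G d.

Definition in_GLG (phi : 'M[K]_d) : Prop :=
  phi \in unitmx /\ forall g, g \in G -> phi *m rho g = rho g *m phi.

Definition G_invariant n (theta : tensor K d n) : Prop :=
  forall g, g \in G -> twist theta (fun _ => rho g) = theta.
End Rep.

(* Main.v *)
Require Import Defs.
From HB Require Import structures.
From mathcomp Require Import all_boot all_order all_algebra all_fingroup all_solvable all_character.
From mathcomp Require Import zify ring.
From Stdlib Require Import ClassicalEpsilon.
Import GRing.Theory.
Local Open Scope ring_scope.
Set Implicit Arguments.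
Unset Strict Implicit.

Lemma perm_ext_inj (T : finType) n (f g : 'I_n -> T) :
  injective f -> injective g -> exists s : {perm T}, forall r, s (f r) = g r.
Proof.
move=> injf injg.
have nle : (n <= #|T|)%N.
  by rewrite -[n]card_ord; apply: leq_card injf.
have tr := ntransitive_weak nle (Sym_trans T).
pose t1 := [tuple f r | r < n]; pose t2 := [tuple g r | r < n].
have D1 : t1 \in n.-dtuple([set: T]).
  by apply/dtuple_onP; split => [i j|i]; rewrite ?tnth_mktuple ?inE // => /injf.
have D2 : t2 \in n.-dtuple([set: T]).
  by apply/dtuple_onP; split => [i j|i]; rewrite ?tnth_mktuple ?inE // => /injg.
have [a _ Ea] := atransP2 tr D1 D2.
exists a => r.
have := congr1 (fun t => tnth t r) Ea; rewrite /= tnth_map.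
rewrite /n_act /= tnth_map /= !tnth_ord_tuple tnth_map tnth_ord_tuple /=.
by move=> ->.
Qed.

Section Lex.
Variable d : nat.

Lemma digits_lt (g : nat -> nat) q :
  (forall r, (r < q)%N -> (g r < d)%N) ->
  (\sum_(0 <= r < q) g r * d ^ r < d ^ q)%N.
Proof.
elim: q => [|q IH] Hg; first by rewrite big_geq.
rewrite big_nat_recr //= expnS.
have H1 := IH (fun r Hr => Hg r (ltnW Hr)).
have H2 : (g q < d)%N := Hg q (ltnSn q).
have : (g q * d ^ q <= (d - 1) * d ^ q)%N by apply: leq_mul => //; lia.
nia.
Qed.

Lemma lex_lt m (g g' : nat -> nat) q : (q < m)%N ->
  (forall r, (r < q)%N -> (g r < d)%N) ->
  (forall r, (q < r)%N -> (r < m)%N -> g r = g' r) -> (g q < g' q)%N ->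
  (\sum_(0 <= r < m) g r * d ^ r < \sum_(0 <= r < m) g' r * d ^ r)%N.
Proof.
move=> qm Hd Heq Hlt.
rewrite !(@big_cat_nat _ _ _ q.+1 0 m) //= !big_nat_recr //=.
have -> : (\sum_(q.+1 <= i < m) g i * d ^ i = \sum_(q.+1 <= i < m) g' i * d ^ i)%N.
  by apply: eq_big_nat => i /andP[H1 H2]; rewrite Heq.
have := @digits_lt g q Hd.
have : ((g q).+1 * d ^ q <= g' q * d ^ q)%N by apply: leq_mul.
nia.
Qed.

Variable m : nat.
Definition dig (I : idx d m) (r : nat) : nat :=
  if insub r is Some x then nat_of_ord (I x) else 0%N.
Definition irank (I : idx d m) := (\sum_(0 <= r < m) dig I r * d ^ r)%N.

Lemma digE (I : idx d m) (r : 'I_m) : dig I r = I r.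
Proof. by rewrite /dig valK. Qed.

Lemma dig_lt (I : idx d m) r : (r < m)%N -> (dig I r < d)%N.
Proof. by move=> rm; rewrite /dig insubT. Qed.

Lemma rank_lt (I J : idx d m) (q : 'I_m) :
  (forall r : 'I_m, (q < r)%N -> I r = J r) -> (I q < J q)%N -> (irank I < irank J)%N.
Proof.
move=> Heq Hlt; apply: (@lex_lt m (dig I) (dig J) q (ltn_ord q)).
- by move=> r Hr; apply: dig_lt; apply: ltn_trans Hr _.
- move=> r H1 H2; have -> : r = Ordinal H2 by [].
  by rewrite !digE Heq.
- by rewrite !digE.
Qed.

Lemma diff_top (I J : idx d m) : I != J ->
  exists q : 'I_m, I q != J q /\ forall r : 'I_m, (q < r)%N -> I r = J r.
Proof.
move=> nIJ.
have [q0 Hq0] : exists q0, I q0 != J q0.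
  apply/existsP; apply: contraR nIJ => /existsPn H.
  by apply/eqP/ffunP => x; apply/eqP; move: (H x); rewrite negbK.
case: (@arg_maxnP _ q0 (fun q => I q != J q) (fun q : 'I_m => nat_of_ord q) Hq0) => q Hq Hmax.
exists q; split => // r Hr; apply/eqP; apply: contraTT Hr => Hr.
by rewrite -leqNgt; apply: Hmax.
Qed.

Lemma rank_inj : injective irank.
Proof.
move=> I J HIJ; apply/eqP; apply: contraT => nIJ.
have [q [Hq Habove]] := diff_top nIJ.
case: (ltngtP (I q) (J q)) => H.
- by move: (rank_lt Habove H); rewrite HIJ ltnn.
- have Hab' : forall r : 'I_m, (q < r)%N -> J r = I r by move=> r /Habove ->.
  by move: (rank_lt Hab' H); rewrite HIJ ltnn.
- by move: Hq; rewrite (val_inj H) eqxx.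
Qed.

End Lex.

Lemma linfunE_lin (R : fieldType) (U V : vectType R) (f : U -> V) :
  linear f -> forall u, linfun f u = f u.
Proof.
move=> lf u.
pose fL : {linear U -> V} := HB.pack f (GRing.isLinear.Build _ _ _ _ f lf).
exact: (lfunE fL u).
Qed.

Definition asb (P : Prop) : bool := if excluded_middle_informative P then true else false.
Lemma asbP (P : Prop) : reflect P (asb P).
Proof. by rewrite /asb; case: excluded_middle_informative => H; constructor. Qed.

Lemma scalE (K : fieldType) (a b : K^o) : a *: b = a * b. Proof. by []. Qed.

Section Low.
Variables (K : fieldType) (d m : nat).

Definition lowest (u : tensor K d m) (I : idx d m) :=
  u I != 0 /\ forall J, (irank J < irank I)%N -> u J = 0.

Lemma lowest_ex (u : tensor K d m) : u != 0 -> exists I, lowest u I.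
Proof.
move=> nu.
have [I0 HI0] : exists I0, u I0 != 0.
  apply/existsP; apply: contraR nu => /existsPn H.
  by apply/eqP/ffunP => x; rewrite ffunE; apply/eqP; move: (H x); rewrite negbK.
case: (@arg_minnP _ I0 (fun I => u I != 0) (@irank d m) HI0) => I HI Hmin.
exists I; split => // J HJ; apply/eqP; apply: contraTT HJ => HJ.
by rewrite -leqNgt; apply: Hmin.
Qed.

Lemma many_lowest (W : {vspace tensor K d m}) n : (n <= \dim W)%N ->
  exists I : 'I_n -> idx d m, exists w : 'I_n -> tensor K d m,
    injective I /\ forall a, w a \in W /\ lowest (w a) (I a).
Proof.
move=> nW.
pose L := [set I | asb (exists w, w \in W /\ lowest w I)].
pose pi (u : tensor K d m) : tensor K d m := [ffun I => if I \in L then u I else 0].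
have lin_pi : linear pi.
  move=> a u v; apply/ffunP => I; rewrite !ffunE.
  by case: (I \in L); rewrite ?mulr0 ?scaler0 ?addr0.
have ker0 : (W :&: lker (linfun pi) = 0)%VS.
  apply/eqP; rewrite -subv0; apply/subvP => u; rewrite memv_cap memv_ker memv0.
  case/andP=> uW; rewrite linfunE_lin // => /eqP pu0.
  apply: contraT => nu; have [I [HI Hlow]] := lowest_ex nu.
  have IL : I \in L by rewrite inE; apply/asbP; exists u.
  have E : u I = pi u I by rewrite ffunE IL.
  by move: HI; rewrite E pu0 ffunE eqxx.
have dimL : (\dim W <= #|L|)%N.
  rewrite -(limg_dim_eq ker0).
  pose delta (I : idx d m) : tensor K d m := [ffun J => (J == I)%:R].
  apply: (@leq_trans (size [seq delta X | X <- enum L])); last by rewrite size_map -cardE.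
  apply: (leq_trans _ (dim_span _)); apply: dimvS; apply/subvP => v /memv_imgP [u _ ->].
  rewrite linfunE_lin //.
  have -> : pi u = \sum_(I <- enum L) u I *: delta I.
    apply/ffunP => J; rewrite sum_ffunE !ffunE.
    under eq_bigr do rewrite !ffunE scalE.
    case: ifP => JL.
    - rewrite (bigD1_seq J) ?mem_enum ?enum_uniq //= eqxx mulr1 big1 ?addr0 //.
      by move=> I /negbTE nJI; rewrite eq_sym nJI mulr0.
    - by rewrite big1_seq // => I /andP[_]; rewrite mem_enum => IL; case: eqP => [E|]; rewrite ?mulr0 //; rewrite -E JL in IL.
  rewrite big_seq; apply: memv_suml => X XL; apply: memvZ; apply: memv_span.
  by apply: map_f.
have nL : (n <= #|L|)%N := leq_trans nW dimL.
pose I a := enum_val (widen_ord nL a).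
have Iin : forall a, exists w, w \in W /\ lowest w (I a).
  by move=> a; move: (enum_valP (widen_ord nL a)); rewrite inE => /asbP.
exists I, (fun a => proj1_sig (constructive_indefinite_description _ (Iin a))).
split.
  by move=> a b /enum_val_inj/(congr1 val) /= /val_inj.
by move=> a; case: constructive_indefinite_description.
Qed.

End Low.

Lemma pigeon (T C : finType) (A : {set T}) (f : T -> C) n :
  (n * #|C| < #|A|)%N -> exists c, (n < #|[set x in A | f x == c]|)%N.
Proof.
move=> H; apply/existsP; apply: contraLR H => /existsPn H; rewrite -leqNgt.
rewrite -sum1_card (partition_big f predT) //=.
apply: (@leq_trans (\sum_(c : C) n)); last by rewrite sum_nat_const mulnC.
apply: leq_sum => c _.
move: (H c); rewrite -leqNgt => Hc; apply: leq_trans Hc.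
by rewrite -sum1_card; apply: eq_leq; apply: eq_bigl => x; rewrite inE.
Qed.

Section Select.
Variables (d k1 m : nat) (I : 'I_k1 -> idx d m).

Definition cut a b (r : 'I_m) := I a r != I b r /\ forall r' : 'I_m, (r < r')%N -> I a r' = I b r'.
Definition cutb a b (r : 'I_m) :=
  (I a r != I b r) && [forall r' : 'I_m, (r < r')%N ==> (I a r' == I b r')].

Lemma cutbP a b r : reflect (cut a b r) (cutb a b r).
Proof.
apply: (iffP andP) => [[H1 /forallP H2]|[H1 H2]]; split => //.
  by move=> r' Hr; apply/eqP; move: (H2 r') => /implyP; apply.
by apply/forallP => r'; apply/implyP => /H2 ->.
Qed.

Lemma cut_uniq a b r1 r2 : cut a b r1 -> cut a b r2 -> r1 = r2.
Proof.
move=> [H1 H1'] [H2 H2']; apply: val_inj; case: (ltngtP r1 r2) => // H.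
- by move: H2; rewrite H1' // eqxx.
- by move: H1; rewrite H2' // eqxx.
Qed.

Lemma select_S N : (0 < N)%N -> (k1 * k1 + N.-1 * d ^ k1 < m)%N ->
  exists f : 'I_N -> 'I_m, injective f /\
  exists c0 : {ffun 'I_k1 -> 'I_d}, forall r,
    (forall a, I a (f r) = c0 a) /\ (forall a b, ~ cut a b (f r)).
Proof.
move=> N0 Hm.
have m0 : (0 < m)%N := leq_ltn_trans (leq0n _) Hm.
pose r0 : 'I_m := Ordinal m0.
pose CS := [set r | [exists a, exists b, cutb a b r]].
have cardCS : (#|CS| <= k1 * k1)%N.
  pose g (ab : 'I_k1 * 'I_k1) := odflt r0 [pick r | cutb ab.1 ab.2 r].
  have sub : CS \subset g @: setT.
    apply/subsetP => r; rewrite inE => /existsP[a /existsP[b Hc]].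
    apply/imsetP; exists (a, b) => //; rewrite /g /=.
    case: pickP => [r' Hr'|/(_ r)]; last by rewrite Hc.
    by rewrite /= (cut_uniq (cutbP _ _ _ Hr') (cutbP _ _ _ Hc)).
  apply: (leq_trans (subset_leq_card sub)); apply: (leq_trans (leq_imset_card _ _)).
  by rewrite cardsT card_prod card_ord.
pose NC := ~: CS.
have cardNC : (N.-1 * #|{ffun 'I_k1 -> 'I_d}| < #|NC|)%N.
  rewrite cardsCs card_ffun !card_ord setCK.
  move: Hm cardCS; set X := (N.-1 * _)%N; set Y := (k1 * k1)%N; lia.
have [c0 Hc0] := pigeon (fun r : 'I_m => [ffun a => I a r]) cardNC.
set S0 := [set x in NC | _ == c0] in Hc0.
have NS0 : (N <= #|S0|)%N by lia.
exists (fun r => enum_val (widen_ord NS0 r)); split.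
  by move=> a b /enum_val_inj/(congr1 val) /= /val_inj.
exists c0 => r; move: (enum_valP (widen_ord NS0 r)); rewrite !inE => /andP[Hn /eqP Hc].
split.
  by move=> a; rewrite -Hc ffunE.
move=> a b /cutbP Hcut; move: Hn; apply/negP; rewrite negbK.
by apply/existsP; exists a; apply/existsP; exists b.
Qed.

End Select.

Section CoreData.
Variables (K : fieldType) (d m k : nat).
Variables (I : 'I_k.+1 -> idx d m) (w : 'I_k.+1 -> tensor K d m).
Hypothesis injI : injective I.
Hypothesis Hlow : forall a, lowest (w a) (I a).
Variables (S : {set 'I_m}) (h : 'I_m).
Hypothesis hS : h \in S.
Hypothesis hmax : forall x, x \in S -> (x <= h)%N.
Hypothesis Scol : forall a x, x \in S -> I a x = I a h.
Hypothesis hnc : forall a b, ~ cut I a b h.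

Definition upd a (i : 'I_d) : idx d m := [ffun x => if x \in S then i else I a x].
Definition samecl a b := [forall r : 'I_m, (h < r)%N ==> (I a r == I b r)].
Definition key a := (\sum_(0 <= r < m) (if (h < r)%N then dig (I a) r else 0) * d ^ r)%N.
Definition ex a := (d * key a)%N.
Definition fb b := (d * key b + I b h)%N.

Lemma low_le b J : w b J != 0 -> (irank (I b) <= irank J)%N.
Proof. by move=> nz; rewrite leqNgt; apply: contra nz => /(proj2 (Hlow b)) ->. Qed.

Lemma samecl_h a b : samecl a b -> I a h = I b h.
Proof.
move=> /forallP Hs; apply/eqP; apply: contraT => Hne; exfalso.
apply: (hnc (a := a) (b := b)); split => // r Hr.
by apply/eqP; move: (Hs r) => /implyP; apply.
Qed.

Lemma upd_above a i (x : 'I_m) : (h < x)%N -> upd a i x = I a x.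
Proof.
move=> hx; rewrite ffunE; case: ifP => // xS.
by move: (hmax xS); rewrite leqNgt hx.
Qed.

Lemma upd_h a i : upd a i h = i.
Proof. by rewrite ffunE hS. Qed.

Lemma upd_col a : upd a (I a h) = I a.
Proof. by apply/ffunP => x; rewrite ffunE; case: ifP => // xS; rewrite Scol. Qed.

Lemma upd_lt a b (i : 'I_d) : samecl a b -> (i < I b h)%N -> (irank (upd a i) < irank (I b))%N.
Proof.
move=> /forallP Hs Hi; apply: (rank_lt (q := h)); last by rewrite upd_h.
move=> r hr; rewrite upd_above //; apply/eqP; move: (Hs r) => /implyP; apply.
by [].
Qed.

Lemma key_eq a b : samecl a b -> key a = key b.
Proof.
move=> /forallP Hs; apply: eq_big_nat => r /andP[_ rm]; case: ifP => // hr.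
have -> : r = Ordinal rm by [].
by rewrite !digE; move: (Hs (Ordinal rm)) => /implyP /(_ hr) /eqP ->.
Qed.

Lemma key_lt a b (i : 'I_d) : ~~ samecl a b -> (irank (I b) <= irank (upd a i))%N ->
  (key b < key a)%N.
Proof.
move=> /forallPn [r0]; rewrite negb_imply => /andP [hr0 Hr0] Hle.
have Hne : upd a i != I b.
  by apply: contraNneq Hr0 => E; rewrite -E upd_above.
have [q [Hq Habove]] := diff_top Hne.
have hq : (h < q)%N.
  rewrite ltnNge; apply/negP => qh.
  by move: Hr0; rewrite -(upd_above a i hr0) Habove ?eqxx //; apply: leq_ltn_trans hr0.
case: (ltngtP (upd a i q) (I b q)) => Hc.
- by move: Hle; rewrite leqNgt (rank_lt Habove Hc).
- rewrite /key; apply: (@lex_lt d m _ _ q (ltn_ord q)).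
  + move=> r Hr; have d0 : (0 < d)%N := leq_ltn_trans (leq0n _) (ltn_ord (I b h)).
    case: ifP => // _; apply: (@dig_lt d m); exact: ltn_trans Hr (ltn_ord q).
  + move=> r H1 H2; have -> : r = Ordinal H2 by [].
    have hr : (h < r)%N by apply: ltn_trans H1.
    by rewrite hr !digE -(Habove (Ordinal H2)) // upd_above.
  + by rewrite hq !digE -(upd_above a i hq).
- by move: Hq; rewrite (val_inj Hc) eqxx.
Qed.

Lemma hd : (I (ord0) h < d)%N. Proof. by []. Qed.

Lemma expo a b (i : 'I_d) : w b (upd a i) != 0 -> (fb b <= ex a + i)%N.
Proof.
move=> nz; have Hle := low_le nz.
rewrite /fb /ex; case: (boolP (samecl a b)) => Hs.
  rewrite (key_eq Hs) leq_add2l leqNgt; apply/negP => Hi.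
  by move: Hle; rewrite leqNgt (upd_lt Hs Hi).
have Hk := key_lt Hs Hle.
have Hd : (I b h < d)%N by [].
have : (d * key b + d <= d * key a)%N by rewrite -mulnSr leq_mul2l Hk orbT.
lia.
Qed.

Lemma expo0 a b (i : 'I_d) : w b (upd a i) != 0 -> (ex a + i - fb b == 0)%N ->
  samecl a b /\ i = I b h.
Proof.
move=> nz Hz; have Hle := low_le nz; have He := expo nz.
case: (boolP (samecl a b)) => Hs.
  split => //; apply: val_inj => /=; move: He Hz; rewrite /fb /ex (key_eq Hs); lia.
have Hk := key_lt Hs Hle.
have Hd : (I b h < d)%N by [].
have : (d * key b + d <= d * key a)%N by rewrite -mulnSr leq_mul2l Hk orbT.
move: Hz; rewrite /fb /ex; lia.
Qed.

Definition Mp : 'M[{poly K}]_k.+1 :=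
  \matrix_(a, b) \sum_(i : 'I_d) w b (upd a i) *: 'X^(ex a + i - fb b).

Lemma Mp_horner (t : K) a b :
  (Mp a b).[t] = \sum_(i : 'I_d) w b (upd a i) * t ^+ (ex a + i - fb b).
Proof. by rewrite mxE horner_sum; apply: eq_bigr => i _; rewrite hornerZ hornerXn. Qed.

Lemma Mp_rel (t : K) a b :
  t ^+ fb b * (Mp a b).[t] = t ^+ ex a * \sum_(i : 'I_d) t ^+ i * w b (upd a i).
Proof.
rewrite Mp_horner !mulr_sumr; apply: eq_bigr => i _.
case: (eqVneq (w b (upd a i)) 0) => [->|nz]; first by rewrite !mulr0 mul0r mulr0.
rewrite mulrCA -exprD subnKC ?expo // exprD; ring.
Qed.

Lemma det_Mp0 : (\det Mp).[0] != 0.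
Proof.
rewrite -horner_evalE -det_map_mx.
apply/negP => /det0P [v nv Hv].
have [a0 Ha0] : exists a0, v 0 a0 != 0.
  apply/existsP; apply: contraR nv => /existsPn H.
  by apply/eqP/rowP => j; rewrite mxE; apply/eqP; move: (H j); rewrite negbK.
case: (@arg_maxnP _ a0 (fun a => v 0 a != 0) (fun a => irank (I a)) Ha0) => am Ham Hmax.
have := congr1 (fun M : 'M[K]_(1, k.+1) => M 0 am) Hv; rewrite /= !mxE => /eqP; apply/negP.
rewrite (bigD1 am) //= big1 ?addr0.
  rewrite mxE horner_evalE Mp_horner (bigD1 (I am h)) //= upd_col subnn expr0 mulr1.
  rewrite big1 ?addr0; first by rewrite mulf_neq0 // (proj1 (Hlow am)).
  move=> i Hi; case: (eqVneq (w am (upd am i)) 0) => [->|nz]; first by rewrite mul0r.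
  rewrite expr0n; case: eqP => [/eqP Hz|]; last by rewrite mulr0.
  by have [_ Ei] := expo0 nz Hz; move: Hi; rewrite Ei eqxx.
move=> a Ha; case: (eqVneq (v 0 a) 0) => [->|nva]; first by rewrite mul0r.
have Hlt : (irank (I a) < irank (I am))%N.
  have H1 : (irank (I a) <= irank (I am))%N by apply: Hmax.
  rewrite ltn_neqAle H1 andbT; apply: contra Ha => /eqP /rank_inj /injI ->.
  by [].
rewrite mxE horner_evalE Mp_horner big1 ?mulr0 // => i _.
case: (eqVneq (w am (upd a i)) 0) => [->|nz]; first by rewrite mul0r.
rewrite expr0n; case: eqP => [/eqP Hz|]; last by rewrite mulr0.
have [Hs Ei] := expo0 nz Hz.
move: nz; rewrite Ei -(samecl_h Hs) upd_col => nz.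
by move: (low_le nz); rewrite leqNgt Hlt.
Qed.

Lemma indep (t : K) : t != 0 -> (\det Mp).[t] != 0 ->
  forall lam : 'I_k.+1 -> K,
    (forall a, \sum_b lam b * \sum_(i : 'I_d) t ^+ i * w b (upd a i) = 0) ->
  forall b, lam b = 0.
Proof.
move=> t0 dt lam Hrel.
pose Mt := map_mx (horner_eval t) Mp.
have uMt : Mt \in unitmx.
  by rewrite unitmxE det_map_mx unitfE; exact: dt.
pose mu : 'cV[K]_k.+1 := \col_b (lam b * t ^+ fb b).
have Hmu : Mt *m mu = 0.
  apply/colP => a; rewrite !mxE.
  transitivity (t ^+ ex a * \sum_b lam b * \sum_(i : 'I_d) t ^+ i * w b (upd a i)).
    rewrite mulr_sumr; apply: eq_bigr => b _.
    have E1 : Mt a b = (Mp a b).[t] by rewrite mxE.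
    have E2 : mu b 0 = lam b * t ^+ fb b by rewrite mxE.
    rewrite E1 E2; transitivity (lam b * (t ^+ fb b * (Mp a b).[t])); first by ring.
    by rewrite Mp_rel; ring.
  by rewrite Hrel mulr0.
have mu0 : mu = 0 by rewrite -(mulKmx uMt mu) Hmu mulmx0.
move=> b; have := congr1 (fun M : 'cV[K]_k.+1 => M b 0) mu0; rewrite /= !mxE => /eqP.
by rewrite mulf_eq0 expf_eq0 (negbTE t0) andbF orbF => /eqP.
Qed.

End CoreData.

Section PolyRoot.
Variable K : fieldType.
Hypothesis K_inf : forall s : seq K, exists x : K, x \notin s.

Lemma uniq_seq_ex n : exists s : seq K, uniq s /\ size s = n.
Proof.
elim: n => [|n [s [us ss]]]; first by exists [::].
have [x xs] := K_inf s; exists (x :: s); by rewrite /= xs us ss.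
Qed.

Lemma poly_nonroot (q : {poly K}) : q != 0 -> exists t, q.[t] != 0.
Proof.
move=> q0; have [s [us ss]] := uniq_seq_ex (size q).
case: (boolP (all (root q) s)) => Hall.
  by move: (max_poly_roots q0 Hall us); rewrite ss ltnn.
by move/allPn: Hall => [x _ Hx]; exists x.
Qed.
End PolyRoot.

Section Contr.
Variables (K : fieldType) (d p N : nat).

Definition theta_c (c : 'I_d -> K) : tensor K d N :=
  [ffun l => \sum_i c i * (l == [ffun=> i])%:R].

Definition cmap (theta : tensor K d N) (s : 'S_(p + N)) (u : tensor K d (p + N)) :
  tensor K d p := contract theta (perm_tensor s u).

Lemma cmap_linear theta s : linear (cmap theta s).
Proof.
move=> a u v; apply/ffunP => j; rewrite !ffunE scalE mulr_sumr -big_split.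
apply: eq_bigr => l _; rewrite !ffunE /= scalE; ring.
Qed.

Lemma cmap_theta_c (c : 'I_d -> K) s u (J : idx d p) :
  cmap (theta_c c) s u J = \sum_i c i * u [ffun x => idx_cat J [ffun=> i] (s x)].
Proof.
rewrite !ffunE.
under eq_bigr do rewrite !ffunE big_distrl /=.
rewrite exchange_big; apply: eq_bigr => i _.
rewrite (bigD1 [ffun=> i]) //= eqxx mulr1 big1 ?addr0.
  by [].
by move=> l /negbTE ->; rewrite mulr0 mul0r.
Qed.

Lemma glue_upd (s : 'S_(p + N)) (I0 : idx d (p + N)) (i : 'I_d) :
  [ffun x => idx_cat [ffun r => I0 (s^-1 (lshift N r))%g] [ffun=> i] (s x)] =
  [ffun x => if x \in [set y | (p <= s y)%N] then i else I0 x].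
Proof.
apply/ffunP => x; rewrite !ffunE inE.
case: splitP => r Hr.
  have -> : (p <= s x)%N = false by rewrite Hr leqNgt ltn_ord.
  rewrite ffunE; congr (I0 _).
  have -> : lshift N r = s x by apply: val_inj; rewrite /= Hr.
  by rewrite permK.
by rewrite Hr leq_addr ffunE.
Qed.

End Contr.

Lemma core (K : fieldType) (K_inf : forall s : seq K, exists x : K, x \notin s)
  (d p N k : nat) : (0 < N)%N -> (k.+1 * k.+1 + N.-1 * d ^ k.+1 < p + N)%N ->
  forall W : {vspace tensor K d (p + N)}, (k < \dim W)%N ->
  exists s : 'S_(p + N), exists t : K, t != 0 /\
    (k < \dim (linfun (cmap (theta_c N (fun i : 'I_d => t ^+ i)) s) @: W))%N.
Proof.
move=> N0 Hm W HW.
have [I [w [injI Hw]]] := many_lowest HW.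
have Hlow : forall a, lowest (w a) (I a) by move=> a; case: (Hw a).
have [f [injf [c0 Hf]]] := select_S I N0 Hm.
have [s Hs] := @perm_ext_inj _ _ f (fun r => rshift p r) injf (@rshift_inj p N).
pose S := [set x | (p <= s x)%N].
have inS : forall x, x \in S -> exists r, x = f r.
  move=> x; rewrite inE => Hx.
  have Hr : (s x - p < N)%N by rewrite ltn_subLR // (ltn_ord (s x)).
  exists (Ordinal Hr); apply: (@perm_inj _ s); rewrite Hs; apply: val_inj => /=.
  by rewrite subnKC.
have fS : forall r, f r \in S by move=> r; rewrite inE Hs /= leq_addr.
pose r0 : 'I_N := Ordinal N0.
have [h [hS hmax]] : exists h, h \in S /\ forall x, x \in S -> (x <= h)%N.
  case: (@arg_maxnP _ (f r0) (fun x => x \in S) (fun x : 'I_(p + N) => nat_of_ord x) (fS r0)).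
  by move=> h Hh Hmax; exists h; split.
have Scol : forall a x, x \in S -> I a x = I a h.
  move=> a x /inS [r ->]; have [r' ->] := inS _ hS.
  by rewrite (proj1 (Hf r)) (proj1 (Hf r')).
have hnc : forall a b, ~ cut I a b h.
  by move=> a b; have [r' ->] := inS _ hS; apply: (proj2 (Hf r')).
have dM0 := det_Mp0 injI Hlow hS hmax Scol hnc.
have dM : \det (Mp I w S h) != 0.
  by apply: contra dM0 => /eqP ->; rewrite horner0.
have [t Ht] := poly_nonroot K_inf (mulf_neq0 (negbT (@polyX_eq0 K)) dM).
move: Ht; rewrite hornerM hornerX mulf_eq0 negb_or => /andP [t0 dMt].
exists s, t; split => //.
set F := cmap _ s.
have linF : linear F by apply: cmap_linear.
pose X := [tuple linfun F (w b) | b < k.+1].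
have freeX : free X.
  apply/freeP => lam Hlam; apply: (indep Hlow hS hmax t0 dMt) => a.
  pose J : idx d p := [ffun r => I a (s^-1 (lshift N r))%g].
  have := congr1 (fun T : tensor K d p => T J) Hlam.
  rewrite /= sum_ffunE ffunE => E; rewrite -[RHS]E; apply: eq_bigr => b _.
  rewrite ffunE scalE (nth_map ord0) ?size_enum_ord // nth_ord_enum linfunE_lin // /F cmap_theta_c.
  congr (_ * _); apply: eq_bigr => i _; rewrite glue_upd.
  by congr (_ * w b _); apply/ffunP => x; rewrite !ffunE.
have := eqnP freeX; rewrite size_tuple => <-.
apply: dimvS; apply/span_subvP => v /mapP [b _ ->].
by apply: memv_img; case: (Hw b).
Qed.

Section TensAlg.
Variables (K : fieldType) (d : nat).

Definition Tm m (A : 'M[K]_d) (u : tensor K d m) : tensor K d m :=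
  [ffun l' : idx d m => \sum_(l : idx d m) (\prod_x A (l x) (l' x)) * u l].

Lemma Tm_linear m A : linear (@Tm m A).
Proof.
move=> a u v; apply/ffunP => l'; rewrite !ffunE /= scalE mulr_sumr -big_split.
by apply: eq_bigr => l _; rewrite !ffunE /= scalE; ring.
Qed.

Lemma idx_neq m (l l' : idx d m) : l != l' -> exists x, l x != l' x.
Proof.
move=> H; apply/existsP; apply: contraR H => /existsPn H.
by apply/eqP/ffunP => x; apply/eqP; move: (H x); rewrite negbK.
Qed.

Lemma prod_delta m (l l' : idx d m) :
  \prod_x ((l x == l' x)%:R : K) = (l == l')%:R.
Proof.
case: eqP => [->|/eqP H]; first by rewrite big1 // => x _; rewrite eqxx.
have [x Hx] := idx_neq H; rewrite (bigD1 x) //= (negbTE Hx) mul0r //.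
Qed.

Lemma Tm1 m u : @Tm m 1%:M u = u.
Proof.
apply/ffunP => l'; rewrite ffunE.
under eq_bigr do (under eq_bigr do rewrite mxE; rewrite prod_delta).
rewrite (bigD1 l') //= eqxx mul1r big1 ?addr0 // => l /negbTE ->; by rewrite mul0r.
Qed.

Lemma Tm_comp m A B u : Tm B (@Tm m A u) = Tm (A *m B) u.
Proof.
apply/ffunP => l''; rewrite !ffunE.
transitivity (\sum_(l : idx d m) (\sum_(l' : idx d m)
   (\prod_x A (l x) (l' x)) * (\prod_x B (l' x) (l'' x))) * u l).
  under eq_bigr do rewrite ffunE mulr_sumr.
  rewrite exchange_big; apply: eq_bigr => l _; rewrite mulr_suml.
  by apply: eq_bigr => l' _; ring.
apply: eq_bigr => l _; congr (_ * _).
under [RHS]eq_bigr do rewrite mxE.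
rewrite (bigA_distr_bigA (fun x y => A (l x) y * B y (l'' x))).
by apply: eq_bigr => l' _; rewrite -big_split.
Qed.

Lemma Tm_perm m A (s : 'S_m) u : perm_tensor s (Tm A u) = Tm A (perm_tensor s u).
Proof.
apply/ffunP => l'; rewrite !ffunE.
have bij : bijective (fun L : idx d m => [ffun x => L (s x)]).
  exists (fun L : idx d m => [ffun x => L (s^-1 x)%g]) => L; apply/ffunP => x;
  by rewrite !ffunE ?permK ?permKV.
rewrite (reindex _ (onW_bij _ bij)); apply: eq_bigr => L _.
rewrite !ffunE; congr (_ * u _).
rewrite [RHS](reindex_inj (@perm_inj _ s)); apply: eq_bigr => x _.
by rewrite !ffunE.
Qed.

Lemma idx_cat_l p n (j : idx d p) (l : idx d n) x : idx_cat j l (lshift n x) = j x.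
Proof.
by rewrite ffunE (unsplitK (inl _ x) : split (lshift n x) = inl x).
Qed.
Lemma idx_cat_r p n (j : idx d p) (l : idx d n) y : idx_cat j l (rshift p y) = l y.
Proof.
by rewrite ffunE (unsplitK (inr _ y) : split (rshift p y) = inr y).
Qed.

Lemma sum_idx_cat p n (F : idx d (p + n) -> K) :
  \sum_(L : idx d (p + n)) F L = \sum_(j : idx d p) \sum_(l : idx d n) F (idx_cat j l).
Proof.
rewrite pair_big /=.
have bij : bijective (fun jl : idx d p * idx d n => idx_cat jl.1 jl.2).
  exists (fun L : idx d (p + n) => ([ffun x => L (lshift n x)], [ffun y => L (rshift p y)])).
    case=> j l /=; congr (_, _); apply/ffunP => x; rewrite ffunE.
      by rewrite idx_cat_l.
    by rewrite idx_cat_r.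
  move=> L; apply/ffunP => x; rewrite ffunE /=.
  by case: splitP => r Hr; rewrite ffunE; congr (L _); apply: val_inj.
by rewrite (reindex _ (onW_bij _ bij)).
Qed.

Lemma Tm_contract p n A (theta : tensor K d n) (v : tensor K d (p + n)) :
  Tm A (contract (twist theta (fun _ => A)) v) = contract theta (Tm A v).
Proof.
apply/ffunP => j'; rewrite !ffunE.
transitivity (\sum_(j : idx d p) \sum_(l : idx d n) \sum_(l' : idx d n)
  (\prod_x A (j x) (j' x)) * (theta l' * \prod_y A (l y) (l' y)) * v (idx_cat j l)).
  apply: eq_bigr => j _; rewrite ffunE mulr_sumr; apply: eq_bigr => l _.
  rewrite ffunE big_distrl /= mulr_sumr; apply: eq_bigr => l' _; ring.
transitivity (\sum_(l' : idx d n) \sum_(j : idx d p) \sum_(l : idx d n)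
  (\prod_x A (j x) (j' x)) * (theta l' * \prod_y A (l y) (l' y)) * v (idx_cat j l)).
  under eq_bigr do rewrite exchange_big; by rewrite exchange_big.
apply: eq_bigr => l' _; rewrite ffunE sum_idx_cat mulr_sumr; apply: eq_bigr => j _.
rewrite mulr_sumr; apply: eq_bigr => l _.
rewrite big_split_ord /=.
have E1 : \prod_(i < p) A (idx_cat j l (lshift n i)) (idx_cat j' l' (lshift n i))
  = \prod_(x < p) A (j x) (j' x) by apply: eq_bigr => x _; rewrite !idx_cat_l.
have E2 : \prod_(i < n) A (idx_cat j l (rshift p i)) (idx_cat j' l' (rshift p i))
  = \prod_(y < n) A (l y) (l' y) by apply: eq_bigr => x _; rewrite !idx_cat_r.
rewrite E1 E2; ring.
Qed.

Lemma twist_twist n (theta : tensor K d n) (A B : 'I_n -> 'M[K]_d) :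
  twist (twist theta A) B = twist theta (fun x => B x *m A x).
Proof.
apply/ffunP => l; rewrite !ffunE.
transitivity (\sum_(l' : idx d n) \sum_(l'' : idx d n)
   theta l' * ((\prod_x A x (l'' x) (l' x)) * \prod_x B x (l x) (l'' x))).
  under eq_bigr do rewrite ffunE big_distrl /=.
  rewrite exchange_big; apply: eq_bigr => l' _; apply: eq_bigr => l'' _; ring.
apply: eq_bigr => l' _; rewrite -mulr_sumr; congr (_ * _).
under [RHS]eq_bigr do rewrite mxE.
rewrite (bigA_distr_bigA (fun x y => B x (l x) y * A x y (l' x))).
by apply: eq_bigr => l'' _; rewrite -big_split; apply: eq_bigr => x _; rewrite mulrC.
Qed.

Lemma twist_diag n (theta : tensor K d n) (e : 'I_n -> 'rV[K]_d) :
  twist theta (fun x => diag_mx (e x)) = [ffun l => theta l * \prod_x e x 0 (l x)].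
Proof.
apply/ffunP => l; rewrite !ffunE (bigD1 l) //= [X in _ + X]big1 ?addr0.
  by congr (_ * _); apply: eq_bigr => x _; rewrite mxE eqxx mulr1n.
move=> l' Hl'; have [x Hx] := idx_neq Hl'.
by rewrite (bigD1 x) //= mxE eq_sym (negbTE Hx) mulr0n mul0r mulr0.
Qed.

End TensAlg.

Section Rep2.
Variables (K : fieldType) (d : nat).

Lemma twist_ext n (theta : tensor K d n) (A B : 'I_n -> 'M[K]_d) :
  (forall x, A x = B x) -> twist theta A = twist theta B.
Proof.
move=> H; apply/ffunP => l; rewrite !ffunE; apply: eq_bigr => l' _.
by congr (_ * _); apply: eq_bigr => x _; rewrite H.
Qed.

Lemma theta_c_ext N (c c' : 'I_d -> K) : (forall i, c i = c' i) -> theta_c N c = theta_c N c'.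
Proof. by move=> H; apply/ffunP => l; rewrite !ffunE; apply: eq_bigr => i _; rewrite H. Qed.

Lemma twist_theta_c_diag N (c : 'I_d -> K) (e : 'I_N -> 'rV[K]_d) :
  twist (theta_c N c) (fun x => diag_mx (e x)) =
  theta_c N (fun i => c i * \prod_x e x 0 i).
Proof.
rewrite twist_diag; apply/ffunP => l; rewrite !ffunE big_distrl /=.
apply: eq_bigr => i _; case: eqP => [->|_]; last by rewrite !mulr0 mul0r.
by rewrite !mulr1; congr (_ * _); apply: eq_bigr => x _; rewrite ffunE.
Qed.

Lemma diag_of (A : 'M[K]_d) : is_diag_mx A -> A = diag_mx (\row_i A i i).
Proof.
move=> /is_diag_mxP H; apply/matrixP => i j; rewrite !mxE.
case: (eqVneq i j) => [->|nij]; first by rewrite mulr1n.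
by rewrite mulr0n H //; apply: contraNneq nij => /val_inj ->.
Qed.

Lemma mulmx_diag_ii (X : 'M[K]_d) (D : 'M[K]_d) i : is_diag_mx D ->
  (X *m D) i i = X i i * D i i.
Proof.
move=> /is_diag_mxP H; rewrite mxE (bigD1 i) //= big1 ?addr0 // => j nji.
by rewrite H ?mulr0 //; apply: contraNneq nji => /val_inj ->.
Qed.

Lemma sandwich (P Q X Y : 'M[K]_d) : P *m Q = 1%:M ->
  (Q *m X *m P) *m (Q *m Y *m P) = Q *m (X *m Y) *m P.
Proof.
move=> PQ; rewrite -!mulmxA; congr (_ *m _); congr (_ *m _).
by rewrite mulmxA PQ mul1mx.
Qed.

End Rep2.

Lemma limg_dim_le (R : fieldType) (U V : vectType R) (f : 'Hom(U, V)) (X : {vspace U}) :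
  (\dim (f @: X) <= \dim X)%N.
Proof. by rewrite -(limg_ker_dim f X) leq_addl. Qed.

Unset Implicit Arguments.

Theorem lemma3p5 (K : fieldType) (gT : finGroupType) (G : {group gT})
  (G_abelian : abelian G)
  (K_infinite : forall s : seq K, exists x : K, x \notin s)
  (G_diag : forall (n : nat) (r : mx_representation K G n),
     exists2 P : 'M[K]_n, P \in unitmx &
       forall g, g \in G -> is_diag_mx (P *m r g *m invmx P))
  (d : nat) (rho : mx_representation K G d) :
  exists n1 : nat, (0 < n1)%N /\
  exists theta0 : tensor K d n1, G_invariant rho theta0 /\
  forall k : nat, exists M1 : nat,
    forall p : nat, (M1 < p + n1)%N ->
    forall W : {vspace tensor K d (p + n1)},
      (forall (s : 'S_(p + n1)) (phi : 'I_n1 -> 'M[K]_d),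
          (forall i, in_GLG rho (phi i)) ->
          (\dim (contract_image (twist theta0 phi) s W) <= k)%N) ->
      (\dim W <= k)%N.
Proof.
pose N := #|G|.
have N0 : (0 < N)%N := cardG_gt0 G.
have [P Pu Pdiag] := G_diag d rho.
pose Q := invmx P.
have QP : Q *m P = 1%:M := mulVmx Pu.
have PQ : P *m Q = 1%:M := mulmxV Pu.
pose Dl g := P *m rho g *m Q.
have rhoE : forall g, rho g = Q *m Dl g *m P.
  by move=> g; rewrite /Dl !mulmxA QP mul1mx -mulmxA QP mulmx1.
have Dpow : forall g, g \in G -> forall n i, (P *m rho (g ^+ n)%g *m Q) i i = Dl g i i ^+ n.
  move=> g Gg; elim=> [|n IH] i.
    by rewrite expg0 repr_mx1 mulmx1 PQ mxE eqxx.
  rewrite expgSr repr_mxM ?groupX // exprSr -IH.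
  rewrite -mulmx_diag_ii ?Pdiag //; congr (_ i i).
  by rewrite /Dl !mulmxA -(mulmxA _ Q P) QP mulmx1.
have DN : forall g, g \in G -> forall i, Dl g i i ^+ N = 1.
  by move=> g Gg i; rewrite -Dpow // expg_cardG // repr_mx1 mulmx1 PQ mxE eqxx.
pose theta1 := theta_c N (fun _ : 'I_d => (1 : K)).
exists N; split => //.
exists (twist theta1 (fun _ => Q)); split.
  move=> g Gg; rewrite twist_twist.
  rewrite (@twist_ext _ _ _ _ _ (fun _ => Q *m diag_mx (\row_i Dl g i i))); last first.
    move=> _; rewrite -(diag_of (Pdiag g Gg)) !mulmxA QP mul1mx.
    by [].
  rewrite -(twist_twist theta1 (fun _ => diag_mx (\row_i Dl g i i)) (fun _ => Q)).
  rewrite twist_theta_c_diag; congr (twist _ _); apply: theta_c_ext => i.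
  by rewrite prodr_const card_ord mxE DN // mulr1.
move=> k; exists (k.+1 * k.+1 + N.-1 * d ^ k.+1)%N => p Hp W HW.
rewrite leqNgt; apply/negP => HdW.
have linTQ := @Tm_linear K d (p + N) Q.
have linTP := @Tm_linear K d (p + N) P.
pose W' := (linfun (Tm Q) @: W)%VS.
have HdW' : (k < \dim W')%N.
  apply: (leq_trans HdW); apply: (leq_trans _ (limg_dim_le (linfun (Tm P)) W')).
  apply: dimvS; apply/subvP => u uW.
  have -> : u = linfun (Tm P) (linfun (Tm Q) u).
    by rewrite !linfunE_lin // Tm_comp QP Tm1.
  by apply: memv_img; apply: memv_img.
have [s [t [t0 Hdim]]] := core K_infinite N0 Hp HdW'.
pose e (x : 'I_N) : 'rV[K]_d := if (val x == 0)%N then \row_i t ^+ i else const_mx 1.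
pose phi x := Q *m diag_mx (e x) *m P.
have GL : forall x, in_GLG rho (phi x).
  move=> x; split.
    rewrite !unitmx_mul unitmx_inv Pu andbT /= unitmxE det_diag unitfE.
    by apply/prodf_neq0 => i _; rewrite /e; case: ifP => _; rewrite mxE ?oner_neq0 ?expf_neq0.
  move=> g Gg; rewrite rhoE /phi !sandwich //; congr (_ *m _ *m _).
  have E : Dl g = diag_mx (\row_i Dl g i i) := diag_of (Pdiag g Gg).
  by rewrite E; apply: diag_mx_comm.
have Hk := HW s phi GL.
have Etw : twist (twist theta1 (fun _ => Q)) phi =
           twist (theta_c N (fun i : 'I_d => t ^+ i)) (fun _ => Q).
  rewrite twist_twist (@twist_ext _ _ _ _ _ (fun x => Q *m diag_mx (e x))); last first.
    by move=> x; rewrite /phi -!mulmxA PQ mulmx1.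
  rewrite -(twist_twist theta1 (fun x => diag_mx (e x)) (fun _ => Q)) twist_theta_c_diag.
  congr (twist _ _); apply: theta_c_ext => i; rewrite mul1r.
  rewrite (bigD1 (Ordinal N0)) //= big1 ?mulr1.
    by rewrite /e /= mxE.
  move=> x Hx; rewrite /e; case: ifP => [/eqP Hx0|_]; last by rewrite mxE.
  by move: Hx; have -> : x = Ordinal N0 by apply: val_inj. 
rewrite Etw in Hk.
move: Hdim; apply/negP; rewrite -leqNgt; apply: (leq_trans _ Hk).
have linTQp := @Tm_linear K d p Q.
apply: (leq_trans _ (limg_dim_le (linfun (Tm Q)) _)).
apply: dimvS; apply/subvP => v /memv_imgP [w' /memv_imgP [u uW ->] ->].
rewrite (linfunE_lin (cmap_linear _ _)) (linfunE_lin linTQ).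
rewrite /cmap Tm_perm -Tm_contract.
rewrite -(linfunE_lin linTQp); apply: memv_img.
rewrite /contract_image.
have -> : contract (twist (theta_c N (fun i : 'I_d => t ^+ i)) (fun _ => Q)) (perm_tensor s u)
  = linfun (cmap (twist (theta_c N (fun i : 'I_d => t ^+ i)) (fun _ => Q)) s) u.
  by rewrite (linfunE_lin (cmap_linear _ _)).
by apply: memv_img.
Qed.
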